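(* Let $(V,Y_V)$ be a vertex algebra, $(M,Y_M)$ a $V$-module equipped with an operator $d$ satisfying $[d,Y_M(v,z)]=\frac{d}{dz}Y_M(v,z)$, and let $\overline V=V\oplus M$ be the vertex algebra with $$Y(v_1+m_1,z)(v_2+m_2)=Y_V(v_1,z)v_2+Y_M(v_1,z)m_2+e^{zd}Y_M(v_2,-z)m_1 .$$ Let $M_2,M_3$ be $V$-modules and let $\mathcal Y(\cdot,z)$ be an intertwining operator of type $\binom{M_3}{M\ \ M_2}$ (compatible with $d$, i.e. $\mathcal Y(dm,z)=\frac{d}{dz}\mathcal Y(m,z)$) involving only integral powers of $z$, i.e. $\mathcal Y(m,z)m_2\in M_3((z))$. Then $$Y_{M_2\oplus M_3}(v+m,z)(m_2+m_3)=Y(v,z)(m_2+m_3)+\mathcal Y(m,z)m_2\qquad(v\in V,\ m\in M,\ m_i\in M_i)$$ defines a $\overline V$-module structure on $M_2\oplus M_3$.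
   Context: Here $Y(v,z)$ on $M_2\oplus M_3$ denotes the direct sum of the module vertex operators of $M_2$ and $M_3$. In the module structure the elements of $M$ act on $M_2$ via $\mathcal Y$ and act by zero on $M_3$. *)

(* Defs.v *)
From HB Require Import structures.
From mathcomp Require Import all_boot all_order all_algebra.
From Stdlib Require Import ClassicalEpsilon.
Set Implicit Arguments. Unset Strict Implicit. Unset Printing Implicit Defensive.
Import Order.TTheory GRing.Theory Num.Theory.
Local Open Scope ring_scope.

(* A "mode map" Y : A -> int -> B -> C encodes Y(a,z)b = \sum_n (Y a n b) z^{-n-1}. *)

(* Sum of a finitely supported family: the eventual value of partial sums
   (unspecified if the partial sums do not stabilize). *)
Definition fsum (W : zmodType) (f : nat -> W) : W :=
  epsilon (inhabits 0)
    (fun s => exists K : nat, forall K' : nat, (K <= K')%N ->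
       \sum_(i < K') f i = s).

Definition binz (F : fieldType) (m : int) (i : nat) : F :=
  (\prod_(j < i) (m%:~R - (j : nat)%:R)) / (i`!)%:R.

Section Defs.
Variable F : fieldType.

Definition bilinear_modes (A B C : lmodType F) (Y : A -> int -> B -> C) :=
  (forall (a : F) u v n w, Y (a *: u + v) n w = a *: Y u n w + Y v n w) /\
  (forall (a : F) u n w w', Y u n (a *: w + w') = a *: Y u n w + Y u n w').

Definition truncation (A B C : lmodType F) (Y : A -> int -> B -> C) :=
  forall a b, exists N : int, forall n : int, N <= n -> Y a n b = 0.

(* Jacobi identity in component form (Borcherds identity):
   \sum_i binom(m,i) (u_{r+i} v)_{m+n-i} w
     = \sum_i (-1)^i binom(r,i) ( u_{m+r-i} v_{n+i} w
                                   - (-1)^r v_{n+r-i} u_{m+i} w ). *)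
Definition jacobi (A B B' W W3 : lmodType F)
  (Yin : A -> int -> B -> B') (Yout : B' -> int -> W -> W3)
  (YA3 : A -> int -> W3 -> W3) (YB : B -> int -> W -> W3)
  (YA2 : A -> int -> W -> W) :=
  forall u v w (m n r : int),
    fsum (fun i => binz F m i *: Yout (Yin u (r + i%:Z) v) (m + n - i%:Z) w)
    = fsum (fun i => ((-1) ^+ i * binz F r i) *:
        (YA3 u (m + r - i%:Z) (YB v (n + i%:Z) w)
         - ((-1) ^ r) *: YB v (n + r - i%:Z) (YA2 u (m + i%:Z) w))).

Definition is_vertex_algebra (V : lmodType F) (Y : V -> int -> V -> V)
  (one : V) :=
  bilinear_modes Y /\ truncation Y /\
  (forall n v, Y one n v = if n == -1 then v else 0) /\
  (forall v (n : int), 0 <= n -> Y v n one = 0) /\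
  (forall v, Y v (-1) one = v) /\
  jacobi Y Y Y Y Y.

Definition is_module (V : lmodType F) (YV : V -> int -> V -> V) (one : V)
  (W : lmodType F) (YW : V -> int -> W -> W) :=
  [/\ bilinear_modes YW, truncation YW,
      (forall n w, YW one n w = if n == -1 then w else 0) &
      jacobi YV YW YW YW YW].

(* [d, Y_M(v,z)] = d/dz Y_M(v,z), in modes: d(v_n m) - v_n(d m) = -n v_{n-1} m *)
Definition d_compatible (V M : lmodType F) (YM : V -> int -> M -> M)
  (d : M -> M) :=
  forall v n m, d (YM v n m) - YM v n (d m) = - (n%:~R : F) *: YM v (n - 1) m.

(* Intertwining operator of type (M3 / M M2) with integral powers of z:
   I : M -> int -> M2 -> M3, I(m,z)m2 = \sum_n (I m n m2) z^{-n-1} in M3((z)). *)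
Definition is_intertwining (V M M2 M3 : lmodType F)
  (YM : V -> int -> M -> M) (Y2 : V -> int -> M2 -> M2)
  (Y3 : V -> int -> M3 -> M3) (I : M -> int -> M2 -> M3) :=
  [/\ bilinear_modes I, truncation I & jacobi YM I Y3 I Y2].

(* I(dm,z) = d/dz I(m,z): (dm)_n = -n m_{n-1} *)
Definition intertwining_d (M M2 M3 : lmodType F) (I : M -> int -> M2 -> M3)
  (d : M -> M) :=
  forall m n m2, I (d m) n m2 = - (n%:~R : F) *: I m (n - 1) m2.

(* The vertex operator of Vbar = V (+) M:
   Y(v1+m1,z)(v2+m2) = Y_V(v1,z)v2 + Y_M(v1,z)m2 + e^{zd} Y_M(v2,-z) m1,
   whose p-th mode has M-component
   v1_p m2 + \sum_k (-1)^{p+k+1}/k! d^k (v2_{p+k} m1). *)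
Definition Ybar (V M : lmodType F) (YV : V -> int -> V -> V)
  (YM : V -> int -> M -> M) (d : M -> M) (a : V * M) (p : int) (b : V * M)
  : V * M :=
  (YV a.1 p b.1,
   YM a.1 p b.2 +
   fsum (fun k : nat => ((-1) ^ (p + k%:Z + 1) / (k`!)%:R) *:
                         iter k d (YM b.1 (p + k%:Z) a.2))).

Definition Ysum (V M M2 M3 : lmodType F) (Y2 : V -> int -> M2 -> M2)
  (Y3 : V -> int -> M3 -> M3) (I : M -> int -> M2 -> M3)
  (a : V * M) (p : int) (x : M2 * M3) : M2 * M3 :=
  (Y2 a.1 p x.1, Y3 a.1 p x.2 + I a.2 p x.1).

End Defs.

(* Main.v *)
Require Import Defs.
From HB Require Import structures.
From mathcomp Require Import all_boot all_order all_algebra.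
From Stdlib Require Import ClassicalEpsilon.
From mathcomp Require Import ring zify.
Set Implicit Arguments. Unset Strict Implicit.
Import Order.TTheory GRing.Theory Num.Theory.
Local Open Scope ring_scope.

Lemma sum_widen0 (W : zmodType) (f : nat -> W) (N K : nat) :
  (forall i, (N <= i)%N -> f i = 0) -> (N <= K)%N ->
  \sum_(i < K) f i = \sum_(i < N) f i.
Proof.
move=> H HNK; rewrite -!(big_mkord xpredT).
rewrite (big_cat_nat (leq0n N) HNK) /=.
have -> : \sum_(N <= i < K) f i = 0.
  by rewrite big_nat_cond big1 // => i /andP[/andP[Hi _] _]; apply: H.
by rewrite addr0.
Qed.

Lemma fsum_fin (W : zmodType) (f : nat -> W) (N : nat) :
  (forall i, (N <= i)%N -> f i = 0) -> fsum f = \sum_(i < N) f i.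
Proof.
move=> H; rewrite /fsum.
set P := (fun s => _).
have : P (epsilon (inhabits 0) P).
  apply: epsilon_spec; exists (\sum_(i < N) f i); exists N => K' HK.
  exact: sum_widen0.
case=> K0 HK0.
rewrite -(HK0 (maxn K0 N)) ?leq_maxl //.
by apply: sum_widen0 => //; rewrite leq_maxr.
Qed.

Lemma natF_neq0 (F : fieldType) (hF : [pchar F] =i pred0) (n : nat) :
  (0 < n)%N -> n%:R != 0 :> F.
Proof. by move=> Hn; rewrite ((pcharf0P F).1 hF) -lt0n. Qed.

Lemma bl_add1 (F : fieldType) (A B C : lmodType F) (Y : A -> int -> B -> C) :
  bilinear_modes Y -> forall u v n w, Y (u + v) n w = Y u n w + Y v n w.
Proof. by rewrite /bilinear_modes => -[H _] u v n w; rewrite -[u]scale1r H !scale1r. Qed.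

Lemma bl_zero1 (F : fieldType) (A B C : lmodType F) (Y : A -> int -> B -> C) :
  bilinear_modes Y -> forall n w, Y 0 n w = 0.
Proof.
move=> H n w; have := bl_add1 H 0 0 n w; rewrite addr0 => E.
by apply: (addrI (Y 0 n w)); rewrite addr0 -E.
Qed.

Lemma bl_scale1 (F : fieldType) (A B C : lmodType F) (Y : A -> int -> B -> C) :
  bilinear_modes Y -> forall a u n w, Y (a *: u) n w = a *: Y u n w.
Proof. by move=> H a u n w; case: (H) => H1 _ ; rewrite -/(bilinear_modes Y) in H; rewrite -[a *: u]addr0 H1 bl_zero1 // addr0. Qed.

Lemma bl_sum1 (F : fieldType) (A B C : lmodType F) (Y : A -> int -> B -> C) :
  bilinear_modes Y -> forall N (f : 'I_N -> A) n w,
  Y (\sum_(i < N) f i) n w = \sum_(i < N) Y (f i) n w.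
Proof.
move=> H N f n w; apply: (big_morph (fun u => Y u n w)).
- by move=> x y; apply: bl_add1.
- by apply: bl_zero1.
Qed.

Lemma bl_add2 (F : fieldType) (A B C : lmodType F) (Y : A -> int -> B -> C) :
  bilinear_modes Y -> forall u n w w', Y u n (w + w') = Y u n w + Y u n w'.
Proof. by rewrite /bilinear_modes => -[_ H] u n w w'; rewrite -[w]scale1r H !scale1r. Qed.

Lemma bl_zero2 (F : fieldType) (A B C : lmodType F) (Y : A -> int -> B -> C) :
  bilinear_modes Y -> forall u n, Y u n 0 = 0.
Proof.
move=> H u n; have := bl_add2 H u n 0 0; rewrite addr0 => E.
by apply: (addrI (Y u n 0)); rewrite addr0 -E.
Qed.

Lemma bl_scale2 (F : fieldType) (A B C : lmodType F) (Y : A -> int -> B -> C) :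
  bilinear_modes Y -> forall a u n w, Y u n (a *: w) = a *: Y u n w.
Proof. by move=> H a u n w; case: (H) => _ H1; rewrite -[a *: w]addr0 H1 bl_zero2 // addr0. Qed.

Lemma bl_sub2 (F : fieldType) (A B C : lmodType F) (Y : A -> int -> B -> C) :
  bilinear_modes Y -> forall u n w w', Y u n (w - w') = Y u n w - Y u n w'.
Proof.
move=> H u n w w'; rewrite bl_add2 //.
by rewrite -scaleN1r bl_scale2 // scaleN1r.
Qed.


Definition bz (F : fieldType) (x : F) (i : nat) : F :=
  (\prod_(j < i) (x - (j : nat)%:R)) / (i`!)%:R.

Lemma binzE (F : fieldType) m i : binz F m i = bz (m%:~R) i.
Proof. by []. Qed.

Lemma bz0 (F : fieldType) (x : F) : bz x 0 = 1.
Proof. by rewrite /bz big_ord0 fact0 divr1. Qed.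

Lemma bz_pascal (F : fieldType) (hF : [pchar F] =i pred0) (x : F) k :
  bz x k.+1 = bz (x - 1) k.+1 + bz (x - 1) k.
Proof.
rewrite /bz big_ord_recl big_ord_recr /=.
have -> : \prod_(i < k) (x - (lift ord0 i : nat)%:R) = \prod_(i < k) (x - 1 - (i : nat)%:R).
  by apply: eq_bigr => i _; rewrite /= /bump /= natrD opprD addrA.
set P := \prod_(i < k) (x - 1 - (i : nat)%:R).
rewrite factS natrM.
have h1 := natF_neq0 hF (fact_gt0 k).
have h2 := natF_neq0 hF (ltn0Sn k).
rewrite -addn1 natrD in h2 *.
field.
by rewrite h1 h2.
Qed.

Lemma bz_zero (F : fieldType) i : bz (0 : F) i.+1 = 0.
Proof. by rewrite /bz big_ord_recl /= subr0 mul0r mul0r. Qed.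

Definition Tz (F : fieldType) (x y : F) (j : nat) : F :=
  \sum_(i < j.+1) ((-1) ^+ i * bz x i * bz (x + y - (i : nat)%:R) (j - i)).

Lemma Tz0 (F : fieldType) (x y : F) : Tz x y 0 = 1.
Proof. by rewrite /Tz big_ord1 /= !bz0 mulr1 mul1r. Qed.

Lemma Tz_rec (F : fieldType) (hF : [pchar F] =i pred0) (x y : F) J :
  Tz x y J.+1 = Tz (x - 1) (y + 1) J.+1 - Tz (x - 1) y J.
Proof.
rewrite /Tz big_ord_recl [X in _ = X - _]big_ord_recl /= !bz0 !subr0 !mulr1.
have -> : x - 1 + (y + 1) = x + y by ring.
rewrite -addrA; congr (_ + _).
rewrite -sumrN -big_split /=; apply: eq_bigr => i _.
rewrite /bump /= !add1n subSS bz_pascal // -/(x - 1).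
have -> : x + y - (i.+1)%:R = x - 1 + y - i%:R.
  by rewrite -addn1 natrD; ring.
rewrite exprS; ring.
Qed.

Lemma Tz_base (F : fieldType) (y : F) j : Tz 0 y j = bz y j.
Proof.
case: j => [|j]; first by rewrite Tz0 bz0.
rewrite /Tz big_ord_recl /= big1 ?addr0; last by move=> i _; rewrite bz_zero mulr0 mul0r.
by rewrite expr0 bz0 !mul1r add0r subr0 subn0.
Qed.

Lemma Tz_up (F : fieldType) (hF : [pchar F] =i pred0) (x : F) :
  (forall y j, Tz (x - 1) y j = bz y j) -> forall y j, Tz x y j = bz y j.
Proof.
move=> IH y [|J]; first by rewrite Tz0 bz0.
rewrite Tz_rec // !IH (bz_pascal hF (y + 1)) addrK.
by rewrite addrK.
Qed.

Lemma Tz_down (F : fieldType) (hF : [pchar F] =i pred0) (x : F) :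
  (forall y j, Tz x y j = bz y j) -> forall y j, Tz (x - 1) y j = bz y j.
Proof.
move=> IH y j; elim: j y => [|J IHJ] y; first by rewrite Tz0 bz0.
have := Tz_rec hF x (y - 1) J; rewrite subrK => E.
have -> : Tz (x - 1) y J.+1 = Tz x (y - 1) J.+1 + Tz (x - 1) (y - 1) J.
  by rewrite E subrK.
by rewrite IH IHJ -bz_pascal.
Qed.

Lemma Tz_all (F : fieldType) (hF : [pchar F] =i pred0) (m : int) (y : F) j :
  Tz (m%:~R) y j = bz y j.
Proof.
have Hp : forall k : nat, forall y j, Tz (k%:R : F) y j = bz y j.
  elim=> [|k IHk] y' j'; first by apply: Tz_base.
  apply: Tz_up => // y'' j''; rewrite -addn1 natrD addrK; exact: IHk.
have Hn : forall k : nat, forall y j, Tz (- (k%:R) : F) y j = bz y j.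
  elim=> [|k IHk] y' j'; first by rewrite oppr0; apply: Tz_base.
  rewrite -addn1 natrD opprD; exact: Tz_down.
case: m => k; [exact: Hp | exact: (Hn k.+1)].
Qed.

Lemma binz_vand (F : fieldType) (hF : [pchar F] =i pred0) (m n : int) j :
  \sum_(i < j.+1) ((-1) ^+ i * binz F m i * binz F (m + n - (i : nat)%:Z) (j - i))
  = binz F n j.
Proof.
rewrite binzE -(Tz_all hF m (n%:~R) j) /Tz; apply: eq_bigr => i _.
by rewrite !binzE rmorphB rmorphD.
Qed.

Lemma sum_tri (W : zmodType) N (g : nat -> nat -> W) :
  \sum_(i < N) \sum_(k < (N - i)%N) g i k = \sum_(j < N) \sum_(i < j.+1) g i (j - i)%N.
Proof.
elim: N => [|N IH]; first by rewrite !big_ord0.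
rewrite big_ord_recr [RHS]big_ord_recr /= -IH.
rewrite [X in _ = _ + X]big_ord_recr /= subnn subSnn big_ord1 addrA.
congr (_ + _); rewrite -big_split /=; apply: eq_bigr => i _.
by rewrite subSn ?big_ord_recr // ltnW.
Qed.

Lemma sum_diag (W : zmodType) N (g : nat -> nat -> W) :
  (forall i k, (N <= i + k)%N -> g i k = 0) ->
  \sum_(i < N) \sum_(k < N) g i k = \sum_(j < N) \sum_(i < j.+1) g i (j - i)%N.
Proof.
move=> H; rewrite -sum_tri; apply: eq_bigr => i _.
apply: sum_widen0; last by rewrite leq_subr.
by move=> k Hk; apply: H; rewrite -leq_subLR.
Qed.


Lemma Id_iter (F : fieldType) (M M2 M3 : lmodType F) (I : M -> int -> M2 -> M3)
  (d : M -> M) : intertwining_d I d ->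
  forall k x q w, I (iter k d x) q w =
   ((-1) ^+ k * \prod_(j < k) (q%:~R - (j : nat)%:R)) *: I x (q - k%:Z) w.
Proof.
move=> Hd; elim=> [|k IH] x q w.
  by rewrite big_ord0 expr0 mulr1 scale1r subr0.
rewrite iterS Hd IH scalerA big_ord_recl /=.
have -> : \prod_(i < k) (q%:~R - (bump 0 i)%:R : F) = \prod_(i < k) ((q - 1)%:~R - (i : nat)%:R).
  by apply: eq_bigr => i _; rewrite /bump /= add1n -addn1 natrD rmorphB /=; ring.
have -> : q - 1 - k%:Z = q - (k.+1)%:Z by rewrite -addn1 PoszD; ring.
rewrite exprS subr0; congr (_ *: _); ring.
Qed.

Lemma sign_split (F : fieldType) (p : int) (k : nat) :
  (-1 : F) ^ (p + k%:Z + 1) = (-1) ^ (p + 1) * (-1) ^+ k.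
Proof.
have h : (-1 : F) != 0 by rewrite oppr_eq0 oner_eq0.
by rewrite -addrA [_ + 1]addrC addrA (@expfzDr _ _ (p + 1) k h) exprnP.
Qed.

Lemma sign_sq (F : fieldType) (r : int) : (-1 : F) ^ r * (-1) ^ r = 1.
Proof. by rewrite -expfzMl mulrNN mulr1 exp1rz. Qed.

Lemma trunc_shift (F : fieldType) (A B C : lmodType F) (Y : A -> int -> B -> C) :
  truncation Y -> forall a b (c : int), exists N : nat,
  forall i : nat, (N <= i)%N -> Y a (c + i%:Z) b = 0.
Proof.
move=> H a b c; case: (H a b) => K HK.
exists `|K - c|%N => i Hi; apply: HK.
rewrite -lerBlDl; apply: le_trans (lez_abs _) _.
by rewrite lez_nat.
Qed.

Lemma sum_fst (F : fieldType) (A B : lmodType F) N (f : 'I_N -> A * B) :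
  (\sum_(i < N) f i).1 = \sum_(i < N) (f i).1.
Proof. by apply: (big_morph fst) => //. Qed.

Lemma sum_snd (F : fieldType) (A B : lmodType F) N (f : 'I_N -> A * B) :
  (\sum_(i < N) f i).2 = \sum_(i < N) (f i).2.
Proof. by apply: (big_morph snd) => //. Qed.


Lemma Ysum_bil (F : fieldType) (V M M2 M3 : lmodType F)
  (Y2 : V -> int -> M2 -> M2) (Y3 : V -> int -> M3 -> M3)
  (I : M -> int -> M2 -> M3) :
  bilinear_modes Y2 -> bilinear_modes Y3 -> bilinear_modes I ->
  bilinear_modes (Ysum Y2 Y3 I).
Proof.
move=> H2 H3 HI; split.
- move=> a u v n w; rewrite /Ysum [RHS]surjective_pairing /=.
  case: (H2) => h2 _; case: (H3) => h3 _; case: (HI) => hI _.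
  by rewrite h2 h3 hI scalerDr addrACA.
- move=> a u n w w'; rewrite /Ysum [RHS]surjective_pairing /=.
  case: (H2) => _ h2; case: (H3) => _ h3; case: (HI) => _ hI.
  by rewrite h2 h3 hI scalerDr addrACA.
Qed.

Lemma Ysum_trunc (F : fieldType) (V M M2 M3 : lmodType F)
  (Y2 : V -> int -> M2 -> M2) (Y3 : V -> int -> M3 -> M3)
  (I : M -> int -> M2 -> M3) :
  truncation Y2 -> truncation Y3 -> truncation I ->
  truncation (Ysum Y2 Y3 I).
Proof.
move=> T2 T3 TI [a1 a2] [b1 b2].
case: (T2 a1 b1) => N1 H1; case: (T3 a1 b2) => N2 H2; case: (TI a2 b1) => N3 H3.
exists (Num.max N1 (Num.max N2 N3)) => n Hn.
rewrite /Ysum /= H1 ?H2 ?H3 ?addr0 //; move: Hn; rewrite !ge_max => /and3P[] //.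
Qed.

Lemma pair_ext (F : fieldType) (A B : lmodType F) (x y : A * B) :
  x.1 = y.1 -> x.2 = y.2 -> x = y.
Proof. by case: x y => [? ?] [? ?] /= -> ->. Qed.

Lemma pair00 (F : fieldType) (A B : lmodType F) : ((0 : A), (0 : B)) = 0 :> A * B.
Proof. by []. Qed.

Lemma regroup (F : fieldType) (W : lmodType F) (c s : F) (P Q R S T U : W) :
  c *: ((P + Q + R) - s *: ((S + T) + U)) =
  c *: (P - s *: S) + c *: (Q - s *: U) + c *: (R - s *: T).
Proof.
rewrite -!scalerDr; congr (_ *: _).
rewrite (addrACA P (- (s *: S)) Q (- (s *: U))) (addrACA (P + Q) _ R _) !scalerDr !opprD; congr (_ + _); exact: addrAC.
Qed.

Lemma Ysum_jacobi (F : fieldType) (hF : [pchar F] =i pred0)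
  (V M M2 M3 : lmodType F)
  (YV : V -> int -> V -> V) (one : V)
  (YM : V -> int -> M -> M) (d : {linear M -> M})
  (Y2 : V -> int -> M2 -> M2) (Y3 : V -> int -> M3 -> M3)
  (I : M -> int -> M2 -> M3) :
  truncation YV -> truncation YM ->
  is_module YV one Y2 -> is_module YV one Y3 ->
  is_intertwining YM Y2 Y3 I -> intertwining_d I d ->
  jacobi (Ybar YV YM d) (Ysum Y2 Y3 I) (Ysum Y2 Y3 I) (Ysum Y2 Y3 I) (Ysum Y2 Y3 I).
Proof.
move=> TV TM [B2 T2 _ J2] [B3 T3 _ J3] [BI TI JI] Hd [v1 m1] [v2 m2'] [w2 w3] m n r.
case: (trunc_shift TV v1 v2 r) => Na Ha.
case: (trunc_shift TM v1 m2' r) => Nb Hb.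
case: (trunc_shift TM v2 m1 r) => Nc Hc.
case: (trunc_shift T2 v2 w2 n) => Nd1 Hd1.
case: (trunc_shift T3 v2 w3 n) => Nd2 Hd2.
case: (trunc_shift TI m2' w2 n) => Nd3 Hd3.
case: (trunc_shift T2 v1 w2 m) => Ne1 He1.
case: (trunc_shift T3 v1 w3 m) => Ne2 He2.
case: (trunc_shift TI m1 w2 m) => Ne3 He3.
pose N := (Na + Nb + Nc + Nd1 + Nd2 + Nd3 + Ne1 + Ne2 + Ne3)%N.
have Ha' : forall i, (N <= i)%N -> YV v1 (r + i%:Z) v2 = 0.
  by move=> i Hi; apply: Ha; move: Hi; rewrite /N; lia.
have Hb' : forall i, (N <= i)%N -> YM v1 (r + i%:Z) m2' = 0.
  by move=> i Hi; apply: Hb; move: Hi; rewrite /N; lia.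
have Hc' : forall i k, (N <= i + k)%N -> YM v2 (r + i%:Z + k%:Z) m1 = 0.
  by move=> i k Hi; rewrite -addrA -PoszD; apply: Hc; move: Hi; rewrite /N; lia.
have Hd1' : forall i, (N <= i)%N -> Y2 v2 (n + i%:Z) w2 = 0.
  by move=> i Hi; apply: Hd1; move: Hi; rewrite /N; lia.
have Hd2' : forall i, (N <= i)%N -> Y3 v2 (n + i%:Z) w3 = 0.
  by move=> i Hi; apply: Hd2; move: Hi; rewrite /N; lia.
have Hd3' : forall i, (N <= i)%N -> I m2' (n + i%:Z) w2 = 0.
  by move=> i Hi; apply: Hd3; move: Hi; rewrite /N; lia.
have He1' : forall i, (N <= i)%N -> Y2 v1 (m + i%:Z) w2 = 0.
  by move=> i Hi; apply: He1; move: Hi; rewrite /N; lia.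
have He2' : forall i, (N <= i)%N -> Y3 v1 (m + i%:Z) w3 = 0.
  by move=> i Hi; apply: He2; move: Hi; rewrite /N; lia.
have He3' : forall i, (N <= i)%N -> I m1 (m + i%:Z) w2 = 0.
  by move=> i Hi; apply: He3; move: Hi; rewrite /N; lia.
clear Ha Hb Hc Hd1 Hd2 Hd3 He1 He2 He3.
have iter0 : forall k, iter k d 0 = 0 by elim=> // k IH; rewrite iterS IH linear0.
have Hin : forall i : nat,
  fsum (fun k : nat => ((-1) ^ (r + i%:Z + k%:Z + 1) / (k`!)%:R) *:
                       iter k d (YM v2 (r + i%:Z + k%:Z) m1))
  = \sum_(k < N) ((-1) ^ (r + i%:Z + k%:Z + 1) / (k`!)%:R) *:
                       iter k d (YM v2 (r + i%:Z + k%:Z) m1).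
  move=> i; apply: fsum_fin => k Hk.
  by rewrite Hc' ?iter0 ?scaler0 // (leq_trans Hk) ?leq_addl.
rewrite (fsum_fin (N:=N)); last first.
  move=> i Hi; rewrite /Ysum /Ybar /= Hin big1; last first.
    by move=> k _; rewrite Hc' ?iter0 ?scaler0 // (leq_trans Hi) ?leq_addr.
  by rewrite Ha' // Hb' // addr0 !(bl_zero1 B2, bl_zero1 B3, bl_zero1 BI) addr0 pair00 scaler0.
rewrite [RHS](fsum_fin (N:=N)); last first.
  move=> i Hi; rewrite /Ysum /= Hd1' // Hd2' // Hd3' // He1' // He2' // He3' // addr0.
  by rewrite !(bl_zero2 B2, bl_zero2 B3, bl_zero2 BI) addr0 pair00 scaler0 subrr scaler0.
apply: pair_ext; [rewrite !sum_fst /= | rewrite !sum_snd /=].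
  have J := J2 v1 v2 w2 m n r.
  rewrite (fsum_fin (N:=N)) in J; last by move=> i Hi; rewrite Ha' // bl_zero1 // scaler0.
  rewrite (fsum_fin (N:=N)) in J; last first.
    by move=> i Hi; rewrite Hd1' // He1' // !bl_zero2 // scaler0 subrr scaler0.
  exact: J.
under eq_bigr => i _ do rewrite Hin (bl_add1 BI) (bl_sum1 BI) scalerDr scalerDr addrA.
under [RHS]eq_bigr => i _ do rewrite !(bl_add2 B3) regroup.
rewrite !big_split /=; congr (_ + _ + _).
- have J := J3 v1 v2 w3 m n r.
  rewrite (fsum_fin (N:=N)) in J; last by move=> i Hi; rewrite Ha' // bl_zero1 // scaler0.
  rewrite (fsum_fin (N:=N)) in J; last first.
    by move=> i Hi; rewrite Hd2' // He2' // !bl_zero2 // scaler0 subrr scaler0.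
  exact: J.
- have J := JI v1 m2' w2 m n r.
  rewrite (fsum_fin (N:=N)) in J; last by move=> i Hi; rewrite Hb' // bl_zero1 // scaler0.
  rewrite (fsum_fin (N:=N)) in J; last first.
    by move=> i Hi; rewrite Hd3' // He1' // !bl_zero2 // scaler0 subrr scaler0.
  exact: J.
pose X j := I (YM v2 (r + j%:Z) m1) (n + m - j%:Z) w2.
have HX : forall j, (N <= j)%N -> X j = 0.
  move=> j Hj; rewrite /X; have := Hc' j 0%N; rewrite addr0 addn0 => -> //.
  exact: bl_zero1.
pose sr : F := (-1) ^ (r + 1).
have Hsr : sr = - (-1) ^ r.
  have h : (-1 : F) != 0 by rewrite oppr_eq0 oner_eq0.
  by rewrite /sr expfzDr // expr1z mulrN1.
have EL : \sum_(i < N) binz F m i *: \sum_(k < N)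
        I (((-1) ^ (r + i%:Z + k%:Z + 1) / (k`!)%:R) *:
           iter k d (YM v2 (r + i%:Z + k%:Z) m1)) (m + n - i%:Z) w2
   = \sum_(i < N) \sum_(k < N)
       (binz F m i * (sr * (-1) ^+ i * binz F (m + n - i%:Z) k)) *: X (i + k)%N.
  apply: eq_bigr => i _; rewrite scaler_sumr; apply: eq_bigr => k _.
  rewrite (bl_scale1 BI) Id_iter // !scalerA.
  have -> : X (i + k)%N = I (YM v2 (r + i%:Z + k%:Z) m1) (m + n - i%:Z - k%:Z) w2.
    rewrite /X PoszD addrA; congr (I _ _ w2); ring.
  congr (_ *: _).
  rewrite sign_split [(-1) ^ (r + i%:Z + 1)]sign_split -/sr -mulrA; congr (_ * _).
  rewrite binzE /bz.
  have sq : (-1) ^+ k * (-1) ^+ k = 1 :> F by rewrite -exprMn mulrNN mulr1 expr1n.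
  set P := \prod_(_ < k) _.
  have -> : sr * (-1) ^+ i * (-1) ^+ k / (k`!)%:R * ((-1) ^+ k * P) =
            sr * (-1) ^+ i * ((-1) ^+ k * (-1) ^+ k) * (P / (k`!)%:R) by ring.
  by rewrite sq mulr1.
rewrite EL (sum_diag (g := fun i k => (binz F m i * (sr * (-1) ^+ i * binz F (m + n - i%:Z) k)) *: X (i + k)%N)); last first.
  by move=> i k Hik /=; rewrite (HX _ Hik) scaler0.
have EL2 : forall j : 'I_N, \sum_(i < j.+1)
     (binz F m i * (sr * (-1) ^+ i * binz F (m + n - i%:Z) (j - i))) *: X (i + (j - i))%N
   = (sr * binz F n j) *: X j.
  move=> j; have -> : \sum_(i < j.+1) (binz F m i * (sr * (-1) ^+ i * binz F (m + n - i%:Z) (j - i))) *: X (i + (j - i))%N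
     = \sum_(i < j.+1) (binz F m i * (sr * (-1) ^+ i * binz F (m + n - i%:Z) (j - i))) *: X j.
    by apply: eq_bigr => i _; rewrite subnKC // -ltnS.
  rewrite -scaler_suml; congr (_ *: _).
  rewrite -(binz_vand hF m n j) mulr_sumr; apply: eq_bigr => i _; ring.
rewrite (eq_bigr _ (fun j _ => EL2 j)).
have J := JI v2 m1 w2 n m r.
rewrite (fsum_fin (N:=N)) in J; last by move=> i Hi; move: (HX i Hi); rewrite /X => ->; rewrite scaler0.
rewrite (fsum_fin (N:=N)) in J; last first.
  by move=> i Hi; rewrite Hd1' // He3' // !bl_zero2 // scaler0 subrr scaler0.
have ER : forall i : 'I_N,
  ((-1) ^+ i * binz F r i) *: (I m1 (m + r - i%:Z) (Y2 v2 (n + i%:Z) w2) -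
      (-1) ^ r *: Y3 v2 (n + r - i%:Z) (I m1 (m + i%:Z) w2))
  = sr *: (((-1) ^+ i * binz F r i) *: (Y3 v2 (n + r - i%:Z) (I m1 (m + i%:Z) w2) -
      (-1) ^ r *: I m1 (m + r - i%:Z) (Y2 v2 (n + i%:Z) w2))).
  move=> i; set c := (-1) ^+ i * binz F r i; rewrite [RHS]scalerA [sr * c]mulrC -[RHS]scalerA; apply: f_equal.
  by rewrite Hsr scalerBr scalerA mulNr sign_sq scaleN1r opprK scaleNr addrC.
rewrite [RHS](eq_bigr _ (fun i _ => ER i)) -scaler_sumr -J scaler_sumr.
apply: eq_bigr => j _; rewrite scalerA.
done.
Qed.

Unset Implicit Arguments. Set Strict Implicit.
Theorem lemma2 (F : fieldType) (hF : [pchar F] =i pred0)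
  (V M M2 M3 : lmodType F)
  (YV : V -> int -> V -> V) (one : V)
  (YM : V -> int -> M -> M) (d : {linear M -> M})
  (Y2 : V -> int -> M2 -> M2) (Y3 : V -> int -> M3 -> M3)
  (I : M -> int -> M2 -> M3) :
  is_vertex_algebra YV one ->
  is_module YV one YM ->
  d_compatible YM d ->
  is_vertex_algebra (Ybar YV YM d) (one, 0) ->
  is_module YV one Y2 ->
  is_module YV one Y3 ->
  is_intertwining YM Y2 Y3 I ->
  intertwining_d I d ->
  is_module (Ybar YV YM d) (one, 0) (Ysum Y2 Y3 I).
Proof.
move=> [_ [TV _]] [_ TM _ _] _ _ H2 H3 HI Hd.
have HJ := Ysum_jacobi hF TV TM H2 H3 HI Hd.
case: H2 => B2 T2 V2 _; case: H3 => B3 T3 V3 _; case: HI => BI TI _.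
split.
- exact: Ysum_bil.
- exact: Ysum_trunc.
- move=> k [w2 w3]; rewrite /Ysum /= V2 V3 (bl_zero1 BI) addr0.
  by case: (k == -1).
- exact: HJ.
Qed.
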